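(* Let $p>3$ and $q>6p^4$ be primes, $G=\mathbb{Z}_6^5\times\mathbb{Z}_q$, $H=\mathbb{Z}_p^4$, $A\subset G$ the set defined in the context, $B\subset H$ a spectral set with $|B|=2p$, $\{v_1,\dots,v_4\}$ a basis of $H$ over $\mathbb{Z}_p$, and $t:A\to H$ given by $t(0_{\mathbb{Z}_6^5},k)=v_k$ for $1\le k\le4$ and $t(a)=0_H$ otherwise. Then $P_t=\bigcup_{a\in A}\{a\}\times(t(a)+B)$ is not spectral in $G\times H$.
   Context: A subset $X$ of a finite abelian group $E$ is spectral if there is a set $S$ of characters of $E$ with $|S|=|X|$ and $\hat 1_X(s-s')=0$ for all distinct $s,s'\in S$, where $\hat f(\chi)=\sum_x f(x)\chi(x)$. Characters of $G\times H$ are identified with vectors $(\gamma_1,\gamma_2,\rho)\in\mathbb{Z}_6^5\times\mathbb{Z}_q\times\mathbb{Z}_p^4$ acting by $(u_1,u_2,w)\mapsto e^{2\pi i(\langle\gamma_1,u_1\rangle/6+\gamma_2u_2/q+\langle\rho,w\rangle/p)}$. Construction of $A$: let $v=(1,2,3,4,5)\in\mathbb{Z}_6^5$; for $\pi\in S_5$ let $\pi(v)$ be the vector with permuted coordinates and $A_\pi=\{x\in\mathbb{Z}_6^5:\langle \pi(v),x\rangle\equiv 0\pmod 6\}$. Enumerate $S_5$ as $\pi_0,\dots,\pi_{119}$; for $0\le k\le119$ set $A_k=A_{\pi_k}\times\{k\}$, for $120\le k\le q-1$ set $A_k=A_{\pi_0}\times\{k\}$, and $A=\bigcup_{k=0}^{q-1}A_k$.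 Known fact (may be used): $A$ is a tile of $G$ but is not spectral in $G$. *)

(* Defs.v *)
From HB Require Import structures.
From mathcomp Require Import all_boot all_order all_algebra all_fingroup.
From mathcomp Require Import complex.
From mathcomp Require Import reals trigo Rstruct.
Set Implicit Arguments. Unset Strict Implicit. Unset Printing Implicit Defensive.
Import Order.TTheory GRing.Theory Num.Theory.
Local Open Scope ring_scope.

Definition RR := Rdefinitions.R.
Definition CC := (RR[i])%type.

Definition expi (theta : RR) : CC :=
  ((cos (2 * pi * theta)) +i* (sin (2 * pi * theta)))%C.

Definition vphase (n m : nat) (g u : {ffun 'I_m -> 'Z_n}) : RR :=
  ((\sum_(i < m) (val (g i) * val (u i)))%N)%:R / n%:R.

(* Generic Fourier transform of an indicator and spectrality, for a finite
   abelian group T whose characters are identified with T via a phase map: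
   the character chi acts by x |-> e^{2 pi i phase chi x}. *)
Definition fhat (T : finZmodType) (phase : T -> T -> RR) (X : {set T}) (chi : T)
  : CC := \sum_(x in X) expi (phase chi x).

Definition spectral (T : finZmodType) (phase : T -> T -> RR) (X : {set T}) : Prop :=
  exists S : {set T}, #|S| = #|X| /\
    forall s s', s \in S -> s' \in S -> s != s' -> fhat phase X (s - s') = 0.

Definition Z6_5 := {ffun 'I_5 -> 'Z_6}.
HB.instance Definition _ := Finite.on Z6_5.
HB.instance Definition _ := GRing.Zmodule.on Z6_5.
Definition Gt (q : nat) := (Z6_5 * 'Z_q)%type.
HB.instance Definition _ q := Finite.on (Gt q).
HB.instance Definition _ q := GRing.Zmodule.on (Gt q).
Definition Ht (p : nat) := {ffun 'I_4 -> 'Z_p}.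
HB.instance Definition _ p := Finite.on (Ht p).
HB.instance Definition _ p := GRing.Zmodule.on (Ht p).
Definition GHt (p q : nat) := (Gt q * Ht p)%type.
HB.instance Definition _ p q := Finite.on (GHt p q).
HB.instance Definition _ p q := GRing.Zmodule.on (GHt p q).

Definition phaseH (p : nat) (rho w : Ht p) : RR := vphase rho w.

Definition phaseGH (p q : nat) (chi x : GHt p q) : RR :=
  vphase chi.1.1 x.1.1
  + ((val chi.1.2 * val x.1.2)%N)%:R / q%:R
  + vphase chi.2 x.2.

(* A_pi = {x in Z_6^5 : <pi(v), x> = 0 mod 6},  v = (1,2,3,4,5),
   pi(v)_i = v_{pi(i)} *)
Definition Api (pi : 'S_5) : {set Z6_5} :=
  [set x : Z6_5 | ((\sum_(i < 5) (val (pi i)).+1 * val (x i)) %% 6 == 0)%N].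

(* enumeration pi_0..pi_119 of S_5 given by e; pi_k for k >= 120 is pi_0 *)
Definition pik (e : 'I_120 -> 'S_5) (k : nat) : 'S_5 :=
  match insub k with Some j => e j | None => e ord0 end.

(* A = union over k in Z_q of A_k,  A_k = A_{pi_k} x {k} (or A_{pi_0} x {k}) *)
Definition Aset (q : nat) (e : 'I_120 -> 'S_5) : {set Gt q} :=
  [set a : Gt q | a.1 \in Api (pik e (val a.2))].

Definition is_basis (p : nat) (v : 'I_4 -> Ht p) : Prop :=
  bijective (fun c : {ffun 'I_4 -> 'Z_p} =>
    \sum_(i < 4) [ffun j => c i * v i j] : Ht p).

Definition tmap (p q : nat) (v : 'I_4 -> Ht p) (a : Gt q) : Ht p :=
  if (a.1 == 0) && (1 <= val a.2 <= 4)%N then v (inord (val a.2).-1) else 0.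

Definition Pt (p q : nat) (A : {set Gt q}) (t : Gt q -> Ht p) (B : {set Ht p})
  : {set GHt p q} :=
  [set (a, t a + b) | a in A, b in B].

(* Main.v *)
Require Import Defs.
From HB Require Import structures.
From mathcomp Require Import all_boot all_order all_algebra all_fingroup.
From mathcomp Require Import complex.
From mathcomp Require Import reals trigo Rstruct.
From mathcomp Require Import ring lra zify.
Set Implicit Arguments. Unset Strict Implicit. Unset Printing Implicit Defensive.
Import Order.TTheory GRing.Theory Num.Theory.

Definition perms7 : seq (seq nat) :=
  [:: [:: 0;1;2;3;4]; [:: 0;1;2;4;3]; [:: 0;1;3;2;4]; [:: 0;1;4;3;2];
      [:: 0;2;1;3;4]; [:: 0;3;1;4;2]; [:: 2;0;3;1;4]].

Definition good (a0 a1 a2 a3 a4 : nat) (l : seq nat) : bool :=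
  ((nth 0 l 0).+1 * (2 * a0) + (nth 0 l 1).+1 * (2 * a1) + (nth 0 l 2).+1 * (2 * a2)
   + (nth 0 l 3).+1 * (2 * a3) + (nth 0 l 4).+1 * (2 * a4)) %% 6 == 0.

Lemma comb a0 a1 a2 a3 a4 : a0 < 3 -> a1 < 3 -> a2 < 3 -> a3 < 3 -> a4 < 3 ->
  a0 + a1 + a2 + a3 + a4 != 0 -> has (good a0 a1 a2 a3 a4) perms7.
Proof.
case: a0 => [|[|[|//]]] _; case: a1 => [|[|[|//]]] _; case: a2 => [|[|[|//]]] _;
case: a3 => [|[|[|//]]] _; case: a4 => [|[|[|//]]] _; by [].
Qed.

Lemma perms7_ok : all (fun l => perm_eq l (iota 0 5)) perms7.
Proof. by []. Qed.

Lemma perm_of_list (l : seq nat) : perm_eq l (iota 0 5) ->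
  exists pi : 'S_5, forall i : 'I_5, val (pi i) = nth 0 l i.
Proof.
move=> hl.
have sz : size l = 5 by rewrite (perm_size hl) size_iota.
have lt5 : forall i : 'I_5, nth 0 l i < 5.
  move=> i; have : nth 0 l i \in l by rewrite mem_nth // sz.
  by rewrite (perm_mem hl) mem_iota.
have fi : injective (fun i : 'I_5 => (inord (nth 0 l i) : 'I_5)).
  move=> i j /(congr1 val); rewrite /= !inordK ?lt5 //.
  move/eqP; rewrite nth_uniq ?sz // ?(perm_uniq hl) ?iota_uniq // => /eqP h.
  exact: val_inj.
exists (perm fi) => i; by rewrite permE /= inordK ?lt5.
Qed.

Lemma sum5 (F : 'I_5 -> nat) : \sum_(i < 5) F i =
  F (inord 0) + F (inord 1) + F (inord 2) + F (inord 3) + F (inord 4).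
Proof.
rewrite !big_ord_recl big_ord0 addn0 !addnA.
by congr (_ + _ + _ + _ + _); apply: congr1; apply: val_inj; rewrite /= inordK.
Qed.

Local Open Scope ring_scope.

Lemma expiD (a b : RR) : expi (a + b) = expi a * expi b.
Proof.
rewrite /expi mulrDr trigo.cosD trigo.sinD.
congr (_ +i* _)%C; ring.
Qed.

Lemma expi0 : expi 0 = 1.
Proof. by rewrite /expi mulr0 cos0 sin0. Qed.

Lemma expi1 : expi 1 = 1.
Proof. by rewrite /expi mulr1 mulr_natl cos2pi sin2pi. Qed.

Lemma expi_nat (n : nat) : expi n%:R = 1.
Proof.
elim: n => [|n IH]; first by rewrite expi0.
by rewrite -addn1 natrD expiD IH expi1 mulr1.
Qed.

Lemma expi_natmul (n : nat) (x : RR) : expi (n%:R * x) = expi x ^+ n.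
Proof.
elim: n => [|n IH]; first by rewrite mul0r expi0 expr0.
by rewrite -addn1 natrD mulrDl mul1r expiD IH addn1 exprSr.
Qed.

Definition zeta : CC := expi (1/3).

Lemma zeta3 : zeta ^+ 3 = 1.
Proof. by rewrite /zeta -expi_natmul mulrC -mulrA mulVf ?mulr1 ?expi1 // pnatr_eq0. Qed.

Lemma zeta_neq1 : zeta != 1.
Proof.
apply/eqP => /(congr1 (fun z : CC => complex.Im z)) /=.
have h : 0 < sin (2 * pi * (1/3) : RR).
  apply: sin_gt0_pi; have := @pi_gt0 RR => hp; apply/andP; split; lra.
move=> e; rewrite e in h; by rewrite ltxx in h.
Qed.
Lemma core (n X Y : nat) : (0 < n)%N -> (X <= Y)%N -> X = Y %[mod n] ->
  exists K : nat, (X%:R / n%:R : RR) + K%:R = Y%:R / n%:R.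
Proof.
move=> hn hXY hm.
have : (n %| Y - X)%N by rewrite -eqn_mod_dvd // hm.
case/dvdnP => K hK; exists K.
have -> : Y = (X + K * n)%N by rewrite -hK subnKC.
rewrite natrD natrM mulrDl mulfK // pnatr_eq0; lia.
Qed.

Lemma valZpD n (hn : (1 < n)%N) (x y : 'Z_n) : val (x + y) = ((val x + val y) %% n)%N.
Proof. rewrite /=; move: (nat_of_ord x + nat_of_ord y)%N => k; by rewrite Zp_cast. Qed.

Lemma ffD m (T : zmodType) (a b : {ffun 'I_m -> T}) i : (a + b) i = a i + b i.
Proof. by rewrite ffunE. Qed.

Lemma vphaseD n m (hn : (1 < n)%N) (a b u : {ffun 'I_m -> 'Z_n}) :
  exists K : nat, vphase (a + b) u + K%:R = vphase a u + vphase b u.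
Proof.
rewrite /vphase -mulrDl -natrD -big_split /=.
apply: core; first lia.
  apply: leq_sum => i _; rewrite -mulnDl leq_mul2r ffD valZpD //.
  by rewrite leq_mod orbT.
rewrite -modn_summ -[in RHS]modn_summ; congr (_ %% _)%N; apply: eq_bigr => i _.
by rewrite -mulnDl ffD valZpD // modnMml.
Qed.

Lemma sphaseD n (hn : (1 < n)%N) (a b u : 'Z_n) :
  exists K : nat, ((val (a + b)%R * val u)%N%:R / n%:R : RR) + K%:R =
     (val a * val u)%N%:R / n%:R + (val b * val u)%N%:R / n%:R.
Proof.
rewrite -mulrDl -natrD; apply: core; first lia.
  by rewrite -mulnDl leq_mul2r valZpD // leq_mod orbT.
by rewrite -mulnDl valZpD // modnMml.
Qed.
Lemma vphase_sym n m (a u : {ffun 'I_m -> 'Z_n}) : vphase a u = vphase u a.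
Proof. by rewrite /vphase; congr (_%:R / _); apply: eq_bigr => i _; rewrite mulnC. Qed.

Lemma vphase0 n m (u : {ffun 'I_m -> 'Z_n}) : vphase 0 u = 0.
Proof. by rewrite /vphase big1 ?mul0r // => i _; rewrite ffunE. Qed.

Section GH.
Variables (p q : nat).
Hypotheses (hp : (1 < p)%N) (hq : (1 < q)%N).

Definition EE (x y : GHt p q) : CC := expi (phaseGH x y).

Lemma EE_sym x y : EE x y = EE y x.
Proof. by rewrite /EE /phaseGH vphase_sym [vphase x.2 _]vphase_sym mulnC. Qed.

Lemma EE0 x : EE 0 x = 1.
Proof. by rewrite /EE /phaseGH /= !vphase0 mul0n mul0r !addr0 expi0. Qed.

Lemma EE_add a b x : EE (a + b) x = EE a x * EE b x.
Proof.
rewrite /EE /phaseGH.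
have [K1 h1] := @vphaseD 6 5 isT a.1.1 b.1.1 x.1.1.
have [K2 h2] := @sphaseD q hq a.1.2 b.1.2 x.1.2.
have [K3 h3] := @vphaseD p 4 hp a.2 b.2 x.2.
rewrite -expiD.
have -> : vphase (a + b).1.1 x.1.1 + (val (a + b)%R.1.2 * val x.1.2)%N%:R / q%:R
   + vphase (a + b).2 x.2 = vphase (a.1.1 + b.1.1) x.1.1 + (val (a.1.2 + b.1.2)%R * val x.1.2)%N%:R / q%:R
   + vphase (a.2 + b.2) x.2 by [].
rewrite -[LHS]mulr1 -(expi_nat (K1 + K2 + K3)) -expiD !natrD.
congr expi.
idtac.
lra.
Qed.

Lemma EE_N a x : EE (- a) x = EE a (- x).
Proof.
have h1 : EE (- a) x * EE a x = 1 by rewrite -EE_add addNr EE0.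
have h2 : EE a (- x) * EE a x = 1 by rewrite ![EE a _]EE_sym -EE_add addNr EE0.
have hz : EE a x != 0 by apply/eqP => h; move: h1; rewrite h mulr0 => /eqP; rewrite eq_sym oner_eq0.
by apply: (mulIf hz); rewrite h1 h2.
Qed.

Lemma key (n : nat) (lam xs : 'I_n -> GHt p q) (lam_inj : injective lam) :
  (forall i i', i != i' -> \sum_j EE (lam i - lam i') (xs j) = 0) ->
  forall j j', j != j' -> \sum_i EE (xs j' - xs j) (lam i) = 0.
Proof.
move=> ortho j j' njj.
have n0 : (0 < n)%N by apply: leq_ltn_trans (ltn_ord j).
pose M : 'M[CC]_n := \matrix_(i, k) EE (lam i) (xs k).
pose N : 'M[CC]_n := \matrix_(k, i) EE (- lam i) (xs k).
have MN : M *m N = (n%:R : CC)%:M.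
  apply/matrixP => i i'; rewrite !mxE.
  under eq_bigr => k _ do rewrite !mxE -EE_add.
  case: eqVneq => [<-|nii]; last by rewrite ortho.
  under eq_bigr => k _ do rewrite subrr EE0.
  by rewrite sumr_const card_ord mulr1n.
have nz : (n%:R : CC) != 0 by rewrite pnatr_eq0 -lt0n.
have MN1 : M *m ((n%:R)^-1 *: N) = 1%:M.
  by rewrite -scalemxAr MN scale_scalar_mx mulVf.
have := mulmx1C MN1 => /matrixP /(_ j j').
rewrite -scalemxAl !mxE (negbTE njj) mulr0n => /eqP.
rewrite mulf_eq0 invr_eq0 (negbTE nz) /= => /eqP h.
rewrite -[RHS]h; apply: eq_bigr => i _.
by rewrite !mxE EE_N (EE_sym (lam i) (- xs j)) (EE_sym (lam i) (xs j')) -EE_add addrC.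
Qed.

Lemma fhatE (X : {set GHt p q}) c :
  fhat (@phaseGH p q) X c = \sum_(j < #|X|) EE c (enum_val j).
Proof. by rewrite /fhat big_enum_val. Qed.

Lemma spec_dual (S P : {set GHt p q}) : #|S| = #|P| ->
  (forall s s', s \in S -> s' \in S -> s != s' -> fhat (@phaseGH p q) P (s - s') = 0) ->
  forall x y, x \in P -> y \in P -> x != y -> fhat (@phaseGH p q) S (y - x) = 0.
Proof.
move=> hS ortho x y xP yP nxy.
pose lam := fun i : 'I_#|P| => (enum_val (cast_ord (esym hS) i) : GHt p q).
have lam_inj : injective lam.
  by move=> i i' /enum_val_inj /cast_ord_inj.
have key' := @key #|P| lam (fun j => enum_val j) lam_inj.
have := key' _ (enum_rank_in xP x) (enum_rank_in xP y).
rewrite !enum_rankK_in // => h.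
rewrite fhatE (reindex (cast_ord (esym hS))) /=; last first.
  by exists (cast_ord hS) => k _; rewrite ?cast_ordK ?cast_ordKV.
apply: h.
  move=> i i' nii; rewrite -fhatE; apply: ortho; try exact: enum_valP.
  by apply: contra nii => /eqP /lam_inj ->.
apply: contra nxy => /eqP /(congr1 enum_val).
by rewrite !enum_rankK_in // => ->.
Qed.
End GH.


Lemma val6D (x y : 'Z_6) : val (x + y) = ((val x + val y) %% 6)%N.
Proof. by []. Qed.

Definition cf (pi : 'S_5) (x : Z6_5) : nat :=
  ((\sum_(i < 5) (val (pi i)).+1 * val (x i)) %% 6)%N.

Lemma cfD pi (x y : Z6_5) : cf pi (x + y) = ((cf pi x + cf pi y) %% 6)%N.
Proof.
rewrite /cf modnDm -big_split /= -modn_summ -[in RHS]modn_summ.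
congr (_ %% _)%N; apply: eq_bigr => i _.
by rewrite ffunE val6D modnMmr mulnDr.
Qed.

Lemma Api_add pi (x y : Z6_5) : x \in Api pi -> y \in Api pi -> x + y \in Api pi.
Proof.
rewrite !inE => hx hy; have := cfD pi x y; rewrite /cf (eqP hx) (eqP hy) => ->.
by [].
Qed.

Definition tr (i0 : 'I_5) (r : nat) : Z6_5 := [ffun i => if i == i0 then inZp r else 0].

Lemma cf_tr pi r : cf pi (tr (pi^-1 ord0)%g r) = (r %% 6)%N.
Proof.
rewrite /cf /tr (bigD1 (pi^-1 ord0)%g) //= big1 => [|i hi]; last by rewrite ffunE (negbTE hi) muln0.
by rewrite ffunE eqxx permKV /= addn0 mul1n modn_mod.
Qed.

Lemma card_Api pi : #|Api pi| = 1296%N.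
Proof.
set i0 := (pi^-1 ord0)%g.
pose L r := [set x : Z6_5 | cf pi x == r].
have hL : forall r, (r < 6)%N -> #|L r| = #|L 0%N|.
  move=> r hr; apply/eqP; rewrite eqn_leq; apply/andP; split.
    rewrite -(card_in_imset (f := fun x => x + tr i0 (6 - r))); last by move=> x y _ _; apply: addIr.
    apply: subset_leq_card; apply/subsetP => z /imsetP [x]; rewrite !inE => hx ->.
    rewrite cfD cf_tr (eqP hx); apply/eqP.
    by rewrite modnDmr subnKC ?modnn // ltnW.
  rewrite -(card_in_imset (f := fun x => x + tr i0 r)); last by move=> x y _ _; apply: addIr.
  apply: subset_leq_card; apply/subsetP => z /imsetP [x]; rewrite !inE => hx ->.
  by rewrite cfD cf_tr (eqP hx) add0n modn_mod modn_small.
have tot : (\sum_(r < 6) #|L r| = 7776)%N.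
  transitivity (\sum_(r < 6) \sum_(x : Z6_5) ((cf pi x == r) : nat))%N.
    by apply: eq_bigr => r _; rewrite -sum1_card big_mkcond /=; apply: eq_bigr => x _; rewrite inE; case: (_ == _).
  rewrite exchange_big /=.
  transitivity (\sum_(x : Z6_5) 1)%N; last by rewrite sum1_card card_ffun !card_ord.
  apply: eq_bigr => x _.
  have hx : (cf pi x < 6)%N by rewrite ltn_mod.
  rewrite (bigD1 (Ordinal hx)) //= eqxx big1 // => r hr.
  case: eqP => // h; case/eqP: hr; apply: val_inj => /=; by rewrite h.
have : (\sum_(r < 6) #|L r| = 6 * #|L 0%N|)%N.
  rewrite (eq_bigr (fun _ => #|L 0%N|)) => [|r _]; last exact: hL.
  by rewrite sum_nat_const card_ord.
rewrite tot => h.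
have -> : Api pi = L 0%N by apply/setP => x; rewrite !inE.
by apply/eqP; rewrite -(eqn_pmul2l (isT : (0 < 6)%N)) -h.
Qed.



Definition wa (a : {ffun 'I_5 -> 'I_3}) : Z6_5 := [ffun i => inZp (2 * a i)].

Lemma val_wa a i : val (wa a i) = (2 * a i)%N.
Proof. rewrite ffunE /= modn_small //; have := ltn_ord (a i); rewrite /Zp_trunc /=; lia. Qed.

Lemma exists_pi (a : {ffun 'I_5 -> 'I_3}) : (exists i, a i != ord0) ->
  exists pi : 'S_5, wa a \in Api pi.
Proof.
move=> [i0 hi0].
have := @comb (a (inord 0)) (a (inord 1)) (a (inord 2)) (a (inord 3)) (a (inord 4))
  (ltn_ord _) (ltn_ord _) (ltn_ord _) (ltn_ord _) (ltn_ord _).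
case/(_ _)/hasP.
  apply: contra hi0 => hs; apply/eqP/val_inj => /=.
  have -> : i0 = inord (val i0) by apply: val_inj; rewrite /= inordK.
  case: i0 => [[|[|[|[|[|//]]]]] hi] /=; lia.
move=> l /(allP perms7_ok) /perm_of_list [pi hpi] hg; exists pi.
rewrite inE sum5.
move: hg; rewrite /good !hpi !val_wa !inordK //.
Qed.

Lemma zeta_pow_mod m : zeta ^+ m = zeta ^+ (m %% 3).
Proof. by rewrite {1}(divn_eq m 3) exprD mulnC exprM zeta3 expr1n mul1r. Qed.

Lemma sum_zeta (m : nat) : \sum_(j < 3) zeta ^+ (j * m) = if (3 %| m)%N then 3 else 0.
Proof.
under eq_bigr => j _ do rewrite mulnC exprM.
set z := zeta ^+ m.
rewrite !big_ord_recr big_ord0 /= add0r expr0.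
have z3 : z ^+ 3 = 1 by rewrite /z -exprM mulnC exprM zeta3 expr1n.
case: ifP => hm.
  have -> : z = 1 by rewrite /z zeta_pow_mod (eqP hm) expr0.
  rewrite !expr1n; ring.
have zn1 : z != 1.
  rewrite /z zeta_pow_mod.
  have : (m %% 3 < 3)%N by rewrite ltn_mod.
  move: hm; rewrite /dvdn; case: (m %% 3)%N => [|[|[|k]]] hm hlt.
  - by [].
  - by rewrite expr1 zeta_neq1.
  2: by [].
  apply/eqP => h2; move/eqP: zeta_neq1; apply.
  by rewrite -[zeta]mul1r -h2 -exprSr zeta3.
have : (z - 1) * (1 + z + z ^+ 2) = 0.
  have -> : (z - 1) * (1 + z + z ^+ 2) = z ^+ 3 - 1 by ring.
  by rewrite z3 subrr.
move/eqP; rewrite mulf_eq0 subr_eq0 (negbTE zn1) /= => /eqP.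
by rewrite expr1.
Qed.

Definition ua p q (a : {ffun 'I_5 -> 'I_3}) : GHt p q := ((wa a, 0), 0).

Lemma EE_ua p q a (lam : GHt p q) :
  EE (ua p q a) lam = zeta ^+ (\sum_i a i * val (lam.1.1 i)).
Proof.
rewrite /EE /phaseGH.
have -> : vphase (ua p q a).2 lam.2 = 0 by apply: vphase0.
have -> : (val (ua p q a).1.2 * val lam.1.2)%N = 0%N by [].
rewrite mul0r !addr0 /vphase.
rewrite (eq_bigr (fun i => 2 * (a i * val (lam.1.1 i)))%N); last first.
  by move=> i _; rewrite mulnA -val_wa.
rewrite -big_distrr natrM /zeta -expi_natmul; congr expi.
have h6 : (6%:R : RR) = 2 * 3 by rewrite -natrM.
by rewrite h6; field.
Qed.

Lemma sum_ua p q (lam : GHt p q) :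
  \sum_a EE (ua p q a) lam =
    if [forall i, 3 %| val (lam.1.1 i)]%N then 3 ^+ 5 else 0.
Proof.
under eq_bigr => a _ do rewrite EE_ua expr_sum.
rewrite -(bigA_distr_bigA (fun i (j : 'I_3) => zeta ^+ (j * val (lam.1.1 i)))) /=.
under eq_bigr => i _ do rewrite sum_zeta.
case: forallP => h.
  rewrite (eq_bigr (fun _ => 3)) => [|i _]; last by rewrite h.
  by rewrite prodr_const card_ord.
have [i hi] : exists i, ~~ (3 %| val (lam.1.1 i))%N.
  apply/existsP; apply: contraT; rewrite negb_exists => /forallP hh.
  by case: h => i; move: (hh i); rewrite negbK.
by rewrite (bigD1 i) //= (negbTE hi) mul0r.
Qed.

Lemma card_A q e : (1 < q)%N -> #|Aset q e| = (1296 * q)%N.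
Proof.
move=> hq.
have -> : #|Aset q e| = (\sum_(x : Z6_5) \sum_(k : 'Z_q) (if x \in Api (pik e k) then 1 else 0))%N.
  rewrite pair_big /= -sum1_card big_mkcond /=.
  apply: eq_bigr => -[x k] _; by rewrite inE.
rewrite exchange_big /=.
rewrite (eq_bigr (fun _ => 1296%N)) => [|k _]; last by rewrite -big_mkcond /= sum1_card card_Api.
by rewrite sum_nat_const card_ord Zp_cast // mulnC.
Qed.

Lemma card_P p q (A : {set Gt q}) (t : Gt q -> Ht p) (B : {set Ht p}) :
  #|Pt A t B| = (#|A| * #|B|)%N.
Proof.
rewrite /Pt curry_imset2X card_in_imset ?cardsX //.
move=> [a b] [a' b'] _ _ /= [ea eb]; subst a'.
by move/addrI: eb => ->.
Qed.

Theorem lemma3p5 (p q : nat) (e : 'I_120 -> 'S_5) (B : {set Ht p})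
    (v : 'I_4 -> Ht p) :
  prime p -> (3 < p)%N -> prime q -> (6 * p ^ 4 < q)%N ->
  bijective e ->
  spectral (@phaseH p) B -> #|B| = (2 * p)%N ->
  is_basis v ->
  ~ spectral (@phaseGH p q) (Pt (Aset q e) (tmap v) B).
Proof.
move=> pp p3 pq qbig [einv eK eKV] _ hB _ [S [hS hortho]].
have hp1 : (1 < p)%N by apply: prime_gt1.
have hq1 : (1 < q)%N by apply: prime_gt1.
have p4 : (0 < p ^ 4)%N by rewrite expn_gt0; lia.
have q120 : (120 < q)%N.
  have : (p ^ 4 >= 4 ^ 4)%N by rewrite leq_exp2r //; lia.
  lia.
set A := Aset q e.
set P := Pt A (tmap v) B.
have dual := spec_dual hp1 hq1 hS hortho.
have [b0 hb0] : exists b0, b0 \in B.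
  by apply/card_gt0P; rewrite hB; lia.
pose a0 : {ffun 'I_5 -> 'I_3} := [ffun _ => ord0].
have zero : forall a, a != a0 -> fhat (@phaseGH p q) S (ua p q a) = 0.
  move=> a ha.
  have [i hi] : exists i, a i != ord0.
    apply/existsP; apply: contraT; rewrite negb_exists => /forallP hh.
    by case/eqP: ha; apply/ffunP => i; rewrite ffunE; move: (hh i); rewrite negbK => /eqP.
  have [pi hpi] := exists_pi (ex_intro _ i hi).
  set w := wa a.
  pose k : 'Z_q := inZp (einv pi).
  have pk : pik e (val k) = pi.
    rewrite /pik /= modn_small; last by rewrite Zp_cast //; apply: ltn_trans q120.
    case: insubP => [j _ hj|]; last by rewrite ltn_ord.
    by rewrite (_ : j = einv pi) ?eKV //; apply: val_inj.
  have hai0 : (0 < a i)%N.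
    by rewrite lt0n; move: hi; rewrite -(inj_eq val_inj).
  have hai3 := ltn_ord (a i).
  have wnz : w != 0.
    apply/eqP => /(congr1 (fun f : Z6_5 => val (f i))).
    rewrite val_wa ffunE /= => /eqP; rewrite muln_eq0 /= => /eqP h.
    by rewrite h in hai0.
  have wwnz : w + w != 0.
    apply/eqP => /(congr1 (fun f : Z6_5 => val (f i))).
    rewrite ffunE /= val_wa ffunE /=.
    move: hai0 hai3; case: (nat_of_ord (a i)) => [|[|[|]]] //.
  have wA : (w, k) \in A by rewrite inE /= pk.
  have wwA : (w + w, k) \in A by rewrite inE /= pk Api_add.
  have tm : forall z, z != 0 -> tmap v (z, k) = 0.
    by move=> z hz; rewrite /tmap /= (negbTE hz).
  have xP : (((w, k), b0) : GHt p q) \in P.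
    by apply/imset2P; exists (w, k) b0 => //; rewrite tm // add0r.
  have yP : (((w + w, k), b0) : GHt p q) \in P.
    by apply/imset2P; exists (w + w, k) b0 => //; rewrite tm // add0r.
  have nxy : (((w, k), b0) : GHt p q) != ((w + w, k), b0).
    apply: contra wnz => /eqP [] /eqP; rewrite -{1}[w]addr0 (inj_eq (@addrI _ w)).
    by rewrite eq_sym.
  have := dual _ _ xP yP nxy.
  have -> : (((w + w, k), b0) : GHt p q) - ((w, k), b0) = ua p q a.
    rewrite /ua; change ((((w + w - w, k - k), b0 - b0) : GHt p q) = ((w, 0), 0)).
    by rewrite addrK !subrr.
  by [].
have E1 : \sum_a fhat (@phaseGH p q) S (ua p q a) = #|S|%:R.
  rewrite (bigD1 a0) //= big1 ?addr0 => [|a ha]; last exact: zero.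
  rewrite /fhat (eq_bigr (fun _ => 1)) ?sumr_const // => x _.
  rewrite -/(EE _ _) EE_ua big1 ?expr0 // => i _; by rewrite ffunE.
have E2 : \sum_a fhat (@phaseGH p q) S (ua p q a) =
    (#|[set x in S | [forall i, 3 %| val (x.1.1 i)]%N]| * 243)%:R.
  rewrite /fhat exchange_big /=.
  under eq_bigr => x _ do rewrite (sum_ua x).
  rewrite -big_mkcondr /= sumr_const.
  have -> : forall n : nat, (3 : CC) ^+ 5 *+ n = (n * 243)%:R.
    by move=> n; rewrite -natrX -mulr_natr -natrM mulnC.
  congr ((_ * _)%N%:R); apply: eq_card => x; by rewrite inE.
move: E2; rewrite E1 => /eqP; rewrite eqr_nat => /eqP.
rewrite hS card_P card_A // hB => h.
have h3 : (3 * #|[set x in S | [forall i, 3 %| val (x.1.1 i)]%N]| = 32 * p * q)%N.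
  apply/eqP; rewrite -(eqn_pmul2l (isT : (0 < 81)%N)); apply/eqP; lia.
have : (3 %| 32 * p * q)%N by rewrite -h3 dvdn_mulr.
rewrite !Euclid_dvdM // (@dvdn_prime2 3 p isT pp) (@dvdn_prime2 3 q isT pq) => /orP [/orP [//|/eqP h'] | /eqP h']; lia.
Qed.
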